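(* If $\mathcal A\subseteq J_q(n)$ has $|\mathcal A|=M\ge 2$ and minimum $L^1$-distance $2\delta$, then $\psi(\mathcal A)\subseteq[q]^n$ is a code of size $M$ with insdel distance $2\delta$.
   Context: $J_q(n)=\{(a_1,\dots,a_q)\in\mathbb Z_{\ge0}^q:\ \sum_{i=1}^q a_i=n\}$. The $L^1$-distance is $d_L(\mathbf a,\mathbf b)=\sum_{i=1}^q|a_i-b_i|$; the minimum $L^1$-distance of $\mathcal A$ is the minimum over distinct pairs. The map $\psi:J_q(n)\to[q]^n$ sends $(a_1,\dots,a_q)$ to the word consisting of $a_1$ copies of $1$, followed by $a_2$ copies of $2$, ..., followed by $a_q$ copies of $q$. The insdel distance $d_I(\mathbf u,\mathbf v)$ of $\mathbf u,\mathbf v\in[q]^n$ is the minimum number of insertions and deletions transforming one into the other (equivalently $2n-2\ell_{\rm LCS}(\mathbf u,\mathbf v)$, with $\ell_{\rm LCS}$ the length of a longest common subsequence); the insdel distance of a code is the minimum over distinct codewords. *)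

(* Defs.v *)
From mathcomp Require Import all_boot.
Set Implicit Arguments. Unset Strict Implicit. Unset Printing Implicit Defensive.

Definition inJ (q n : nat) (a : q.-tuple nat) : bool := sumn a == n.

(* L1 distance between compositions; |x-y| on nat as (x-y)+(y-x) with truncated subtraction. *)
Definition dL (q : nat) (a b : q.-tuple nat) : nat :=
  \sum_(i < q) ((tnth a i - tnth b i) + (tnth b i - tnth a i)).

(* psi: a_1 copies of symbol 1, then a_2 copies of symbol 2, ... ; symbols of [q] are 'I_q. *)
Definition psi (q : nat) (a : q.-tuple nat) : seq 'I_q :=
  flatten [seq nseq (tnth a i) i | i <- enum 'I_q].

(* length of a longest common subsequence: every subsequence of u is a mask of u *)
Definition lcs (T : eqType) (u v : seq T) : nat :=
  \max_(m : (size u).-tuple bool | subseq (mask m u) v) size (mask m u).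

Definition dI (T : eqType) (u v : seq T) : nat := (size u + size v) - 2 * lcs u v.

Definition min_dist (T : eqType) (dist : T -> T -> nat) (C : seq T) (d : nat) : Prop :=
  (forall x y, x \in C -> y \in C -> x != y -> d <= dist x y) /\
  (exists x y, [/\ x \in C, y \in C, x != y & dist x y = d]).

(* Main.v *)
Require Import Defs.
From mathcomp Require Import all_boot.
From mathcomp Require Import zify.

Lemma size_sum_count (q : nat) (w : seq 'I_q) :
  size w = \sum_(i < q) count_mem i w.
Proof.
elim: w => [|x w IH] /=; first by rewrite big1.
rewrite big_split /= -IH (bigD1 x) //= eqxx big1 /=; first by rewrite add1n ?addn0.
by move=> i /negPf; rewrite eq_sym => ->.
Qed.

Definition gpsi (q : nat) (c : 'I_q -> nat) : seq 'I_q :=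
  flatten [seq nseq (c i) i | i <- enum 'I_q].

Arguments gpsi {q}.
Lemma count_gpsi q (c : 'I_q -> nat) (i : 'I_q) : count_mem i (gpsi c) = c i.
Proof.
rewrite /gpsi count_flatten -map_comp sumnE big_map.
rewrite (eq_bigr (fun j => (j == i) * c j)); last first.
  by move=> j _ /=; rewrite count_nseq /= eq_sym mulnC.
rewrite big_enum /=.
by rewrite (bigD1 i) //= big1 ?eqxx ?mul1n ?addn0 // => j; rewrite ?andbT => /negPf ->.
Qed.

Lemma subseq_gpsi_gen (q : nat) (c d : 'I_q -> nat) (s : seq 'I_q) :
  (forall i, c i <= d i) ->
  subseq (flatten [seq nseq (c i) i | i <- s]) (flatten [seq nseq (d i) i | i <- s]).
Proof.
move=> H; elim: s => [|x s IH] //=.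
apply: cat_subseq => //.
have -> : d x = c x + (d x - c x) by have := H x; lia.
by rewrite nseqD prefix_subseq.
Qed.

Lemma psi_gpsi q (a : q.-tuple nat) : psi a = gpsi (fun i => tnth a i).
Proof. by []. Qed.

Lemma count_psi q (a : q.-tuple nat) i : count_mem i (psi a) = tnth a i.
Proof. by rewrite psi_gpsi count_gpsi. Qed.

Lemma psi_inj q : injective (@psi q).
Proof.
move=> a b E; apply: eq_from_tnth => i.
by rewrite -!count_psi E.
Qed.

Lemma sumn_tuple q (a : q.-tuple nat) : sumn a = \sum_(i < q) tnth a i.
Proof. by rewrite sumnE big_tuple. Qed.

Lemma size_psi q (a : q.-tuple nat) : size (psi a) = sumn a.
Proof.
rewrite size_sum_count sumn_tuple; apply: eq_bigr => i _; exact: count_psi.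
Qed.

Lemma lcs_psi q (a b : q.-tuple nat) :
  lcs (psi a) (psi b) = \sum_(i < q) minn (tnth a i) (tnth b i).
Proof.
apply/eqP; rewrite eqn_leq; apply/andP; split.
  apply/bigmax_leqP => m Hm.
  rewrite size_sum_count; apply: leq_sum => i _.
  rewrite leq_min; apply/andP; split.
    by rewrite -count_psi; apply: leq_count_subseq; apply: mask_subseq.
  by rewrite -count_psi; apply: leq_count_subseq.
set w := gpsi (fun i => minn (tnth a i) (tnth b i)).
have Ha : subseq w (psi a).
  by apply: subseq_gpsi_gen => i; apply: geq_minl.
have Hb : subseq w (psi b).
  by apply: subseq_gpsi_gen => i; apply: geq_minr.
case/subseqP: Ha => m Hsz Hw.
have Hsz' : size m == size (psi a) by rewrite Hsz.
have -> : \sum_(i < q) minn (tnth a i) (tnth b i) = size (mask (Tuple Hsz') (psi a)).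
  rewrite /= -Hw size_sum_count; apply: eq_bigr => i _; by rewrite count_gpsi.
apply: (leq_bigmax_cond (F := fun m : (size (psi a)).-tuple bool => size (mask m (psi a)))).
by rewrite /= -Hw.
Qed.

Lemma dI_psi q n (a b : q.-tuple nat) : inJ n a -> inJ n b ->
  dI (psi a) (psi b) = dL a b.
Proof.
rewrite /inJ => /eqP Ea /eqP Eb.
rewrite /dI lcs_psi !size_psi /dL.
have H : \sum_(i < q) ((tnth a i - tnth b i) + (tnth b i - tnth a i)) +
         2 * \sum_(i < q) minn (tnth a i) (tnth b i) = sumn a + sumn b.
  rewrite !sumn_tuple big_distrr -!big_split /=; apply: eq_bigr => i _.
  move: (tnth a i) (tnth b i) => u v; lia.
lia.
Qed.

Arguments dI_psi {q n a b}.
Theorem corollary4p2 (q n M delta : nat) (A : seq (q.-tuple nat)) :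
  uniq A -> all (inJ n) A -> size A = M -> 2 <= M ->
  min_dist (@dL q) A (2 * delta) ->
  [/\ all (fun w => size w == n) (map (@psi q) A),
      uniq (map (@psi q) A),
      size (map (@psi q) A) = M
    & min_dist (@dI _) (map (@psi q) A) (2 * delta)].
Proof.
move=> uA /allP JA sA _ [H1 [x [y [xA yA xy dxy]]]]; split.
- apply/allP => w /mapP [a aA ->]; rewrite size_psi.
  by have := JA a aA; rewrite /inJ.
- by rewrite map_inj_uniq //; apply: psi_inj.
- by rewrite size_map.
split.
  move=> x' y' /mapP [a aA ->] /mapP [b bA ->] ne.
  rewrite (dI_psi (JA a aA) (JA b bA)); apply: H1 => //.
  by apply: contraNneq ne => ->.
exists (psi x), (psi y); split.
- exact: map_f.
- exact: map_f.
- by rewrite (inj_eq (@psi_inj q)).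
- by rewrite (dI_psi (JA x xA) (JA y yA)).
Qed.
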